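(* Let $\mathcal{D}=\mathcal{P}_{\mathcal{D}}\cup\mathcal{L}_{\mathcal{D}}$ be a non-primal dominating set of the incidence graph of an arbitrary projective plane $\Pi_q$ of order $q$. Let $k$ be the maximum number of points of $\mathcal{P}_{\mathcal{D}}$ on a line, and $c$ the maximum number of lines of $\mathcal{L}_{\mathcal{D}}$ through a point. If $|\mathcal{D}|+|\mathcal{P}_{\mathcal{D}}|\leq 4q-3$, then $k\leq|\mathcal{P}_{\mathcal{D}}|-q+1$. If $|\mathcal{D}|+|\mathcal{L}_{\mathcal{D}}|\leq 4q-3$, then $c\leq|\mathcal{L}_{\mathcal{D}}|-q+1$. Both conclusions hold if $|\mathcal{D}|\leq(5q-3)/2$.
   Context: A dominating set $\mathcal{D}=\mathcal{P}_{\mathcal{D}}\cup\mathcal{L}_{\mathcal{D}}$ of the incidence graph of $\Pi_q$ is a set of points and lines such that every point not in $\mathcal{P}_{\mathcal{D}}$ lies on a line of $\mathcal{L}_{\mathcal{D}}$ and every line not in $\mathcal{L}_{\mathcal{D}}$ contains a point of $\mathcal{P}_{\mathcal{D}}$. $\mathcal{D}$ is primal if it contains $q$ concurrent lines or $q$ collinear points; non-primal otherwise. *)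

(* Defs.v *)
From mathcomp Require Import all_boot.
Set Implicit Arguments. Unset Strict Implicit. Unset Printing Implicit Defensive.

Definition projective_plane (P L : finType) (inc : P -> L -> bool) (q : nat) : Prop :=
  [/\ 2 <= q,
      forall p1 p2 : P, p1 != p2 -> #|[set l : L | inc p1 l && inc p2 l]| = 1,
      forall l1 l2 : L, l1 != l2 -> #|[set p : P | inc p l1 && inc p l2]| = 1,
      exists (a b c d : P), [/\ uniq [:: a; b; c; d] &
          forall l : L, #|[set x in [:: a; b; c; d] | inc x l]| <= 2]
    &
      forall l : L, #|[set p : P | inc p l]| = q.+1].

(* D = PD ∪ LD dominates the incidence graph. *)
Definition dominating (P L : finType) (inc : P -> L -> bool)
    (PD : {set P}) (LD : {set L}) : Prop :=
  (forall p : P, p \notin PD -> exists2 l, l \in LD & inc p l) /\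
  (forall l : L, l \notin LD -> exists2 p, p \in PD & inc p l).

Definition primal (P L : finType) (inc : P -> L -> bool) (q : nat)
    (PD : {set P}) (LD : {set L}) : Prop :=
  (exists p : P, q <= #|[set l in LD | inc p l]|) \/
  (exists l : L, q <= #|[set p in PD | inc p l]|).

Definition max_pts_on_line (P L : finType) (inc : P -> L -> bool) (PD : {set P}) : nat :=
  \max_(l : L) #|[set p in PD | inc p l]|.

Definition max_lines_through_pt (P L : finType) (inc : P -> L -> bool) (LD : {set L}) : nat :=
  \max_(p : P) #|[set l in LD | inc p l]|.

(* Main.v *)
Require Import Defs.
From mathcomp Require Import all_boot.
From mathcomp Require Import zify.
Set Implicit Arguments. Unset Strict Implicit. Unset Printing Implicit Defensive.

Lemma card_sep_sum (V : finType) (C : {set V}) (Q : pred V) :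
  #|[set v in C | Q v]| = \sum_(v in C) (Q v : nat).
Proof.
rewrite -sum1_card big_mkcond /= [RHS]big_mkcond /=.
apply: eq_bigr => v _; rewrite !inE; by case: (v \in C); case: (Q v).
Qed.

Lemma dc_swap (T U : finType) (A : {set T}) (B : {set U}) (R : T -> U -> bool) :
  \sum_(t in A) #|[set u in B | R t u]| = \sum_(u in B) #|[set t in A | R t u]|.
Proof.
under eq_bigr do rewrite card_sep_sum.
under [RHS]eq_bigr do rewrite card_sep_sum.
exact: exchange_big.
Qed.

Lemma sum_lb (T : finType) (A : {set T}) (F : T -> nat) n :
  (forall t, t \in A -> n <= F t) -> #|A| * n <= \sum_(t in A) F t.
Proof. move=> H; rewrite -sum_nat_const; exact: leq_sum. Qed.

Lemma sum_ub (T : finType) (A : {set T}) (F : T -> nat) n :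
  (forall t, t \in A -> F t <= n) -> \sum_(t in A) F t <= #|A| * n.
Proof. move=> H; rewrite -sum_nat_const; exact: leq_sum. Qed.

Lemma dc_le (T U : finType) (A : {set T}) (B : {set U}) (R : T -> U -> bool) n m :
  (forall t, t \in A -> n <= #|[set u in B | R t u]|) ->
  (forall u, u \in B -> #|[set t in A | R t u]| <= m) ->
  #|A| * n <= #|B| * m.
Proof.
move=> HA HB; apply: leq_trans (sum_lb HA) _.
by rewrite dc_swap; apply: sum_ub.
Qed.

Lemma card_split (T : finType) (A : {set T}) (Q : pred T) :
  #|A| = #|[set x in A | Q x]| + #|[set x in A | ~~ Q x]|.
Proof.
rewrite -(cardsID [set x | Q x] A); congr (_ + _); apply: eq_card => x;
by rewrite !inE andbC.
Qed.

Lemma card_le1_sub (T : finType) (A B : {set T}) :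
  A \subset B -> #|B| <= 1 -> #|A| <= 1.
Proof. move=> s h; exact: leq_trans (subset_leq_card s) h. Qed.
Definition geom (P L : finType) (inc : P -> L -> bool) (q : nat) : Prop :=
  [/\ 2 <= q,
      (forall p1 p2 l1 l2, p1 != p2 -> l1 != l2 -> inc p1 l1 -> inc p2 l1 ->
         inc p1 l2 -> inc p2 l2 -> False),
      (forall p1 p2 : P, p1 != p2 -> exists l, inc p1 l && inc p2 l),
      (forall l1 l2 : L, l1 != l2 -> exists p, inc p l1 && inc p l2) &
      ((forall l, #|[set p | inc p l]| = q.+1) /\
       (forall p, #|[set l | inc p l]| = q.+1))].

Lemma geom_dual (P L : finType) (inc : P -> L -> bool) q :
  geom inc q -> geom (fun l p => inc p l) q.
Proof.
case=> h1 h2 h3 h4 [h5 h6]; split=> //.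
- move=> l1 l2 p1 p2 a b c d e f; exact: (h2 p1 p2 l1 l2).
Qed.

Lemma two_lines_le1 (P L : finType) (inc : P -> L -> bool) q p1 p2 :
  geom inc q -> p1 != p2 -> #|[set m | inc p1 m && inc p2 m]| <= 1.
Proof.
case=> _ h2 _ _ _ ne; rewrite leqNgt; apply/card_gt1P => -[x [y [hx hy nxy]]].
move: hx hy; rewrite !inE => /andP[a b] /andP[c d]; exact: (h2 p1 p2 x y).
Qed.

Lemma two_points_le1 (P L : finType) (inc : P -> L -> bool) q l1 l2 :
  geom inc q -> l1 != l2 -> #|[set p | inc p l1 && inc p l2]| <= 1.
Proof. move=> g; exact: (two_lines_le1 (geom_dual g)). Qed.
Lemma plane_geom (P L : finType) (inc : P -> L -> bool) q :
  projective_plane inc q -> geom inc q.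
Proof.
case=> hq h2 h3 [a [b [c [d [hu h4]]]]] h5.
have ex2 : forall p1 p2 : P, p1 != p2 -> exists l, inc p1 l && inc p2 l.
  move=> p1 p2 /h2 e; have : 0 < #|[set l | inc p1 l && inc p2 l]| by rewrite e.
  by case/card_gt0P => l; rewrite inE => ?; exists l.
have ex3 : forall l1 l2 : L, l1 != l2 -> exists p, inc p l1 && inc p l2.
  move=> l1 l2 /h3 e; have : 0 < #|[set p | inc p l1 && inc p l2]| by rewrite e.
  by case/card_gt0P => p; rewrite inE => ?; exists p.
have uq : forall p1 p2 l1 l2, p1 != p2 -> l1 != l2 -> inc p1 l1 -> inc p2 l1 ->
         inc p1 l2 -> inc p2 l2 -> False.
  move=> p1 p2 l1 l2 /h2 e ne i1 i2 i3 i4.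
  have : 1 < #|[set l | inc p1 l && inc p2 l]|.
    by apply/card_gt1P; exists l1, l2; rewrite !inE i1 i2 i3 i4.
  by rewrite e.
have g0 : geom inc q.
  split=> //; split=> // p.
  move: hu => /=; rewrite !inE !negb_or.
  case/and4P => /and3P[nab nac nad] /andP[nbc nbd] ncd _.
  have no3 : forall x y z n, x \in [:: a; b; c; d] -> y \in [:: a; b; c; d] ->
      z \in [:: a; b; c; d] -> x != y -> x != z -> y != z ->
      inc x n -> inc y n -> inc z n -> False.
    move=> x y z n hx hy hz nxy nxz nyz ix iy iz.
    have := h4 n; apply/negP; rewrite -ltnNge.
    have s : x |: (y |: [set z]) \subset [set t in [:: a; b; c; d] | inc t n].
      apply/subsetP => t; rewrite !in_setU1 in_set1 => /or3P [] /eqP ->;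
      by rewrite in_set ?hx ?hy ?hz ?ix ?iy ?iz.
    apply: leq_trans (subset_leq_card s).
    by rewrite !cardsU1 cards1 !inE negb_or nxy nxz nyz.
  have [m hm] : exists m, ~~ inc p m.
    have [m1 /andP[ma mb]] := ex2 a b nab.
    case: (boolP (inc p m1)) => pm1; last by exists m1.
    have [m2 /andP[mc md]] := ex2 c d ncd.
    case: (boolP (inc p m2)) => pm2; last by exists m2.
    have [m3 /andP[ma' mc']] := ex2 a c nac.
    case: (boolP (inc p m3)) => pm3; last by exists m3.
    exfalso; case: (eqVneq p a) => [epa | npa].
      by subst p; apply: (no3 a c d m2); rewrite ?inE ?eqxx ?orbT.
    case: (eqVneq m1 m3) => [e13 | n13]; last exact: (uq p a m1 m3).
    subst m3; by apply: (no3 a b c m1); rewrite ?inE ?eqxx ?orbT.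
  rewrite -(h5 m); apply/eqP; rewrite eqn_leq; apply/andP; split.
  - rewrite -[X in X <= _]muln1 -[X in _ <= X]muln1.
    apply: (@dc_le _ _ _ _ (fun l r => inc r l)).
    + move=> l; rewrite inE => pl.
      have nlm : l != m by apply: contraNneq hm => <-.
      have [r /andP[rl rm]] := ex3 l m nlm.
      by apply/card_gt0P; exists r; rewrite !inE rm rl.
    + move=> r; rewrite inE => rm.
      have npr : p != r by apply: contraNneq hm => ->.
      rewrite -(h2 p r npr).
      by apply: subset_leq_card; apply/subsetP => l; rewrite !inE => /andP[-> ->].
  - rewrite -[X in X <= _]muln1 -[X in _ <= X]muln1.
    apply: (@dc_le _ _ _ _ (fun r l => inc r l)).
    + move=> r; rewrite inE => rm.
      have npr : p != r by apply: contraNneq hm => ->.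
      have [l /andP[pl rl]] := ex2 p r npr.
      by apply/card_gt0P; exists l; rewrite !inE pl rl.
    + move=> l; rewrite inE => pl.
      have nlm : l != m by apply: contraNneq hm => <-.
      rewrite -(h3 l m nlm).
      by apply: subset_leq_card; apply/subsetP => r; rewrite !inE => /andP[-> ->].
exact: g0.
Qed.

Lemma key (P L : finType) (inc : P -> L -> bool) q (PD : {set P}) (LD : {set L}) l :
  geom inc q ->
  (forall m, m \notin LD -> exists2 p, p \in PD & inc p m) ->
  (forall p, p \notin PD -> exists2 m, m \in LD & inc p m) ->
  #|[set p in PD | inc p l]| < q ->
  #|[set p in PD | ~~ inc p l]| <= q - 2 ->
  (q.+1 - #|[set p in PD | inc p l]|) * (q - #|[set p in PD | ~~ inc p l]|) <= #|LD|
  /\ q * q <= #|[set p in PD | ~~ inc p l]| + q * #|LD|.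
Proof.
move=> g' dl dp hk ha; have g := g'; case: g => hq uq ex2 ex3 [hline hdeg].
set k := #|[set p in PD | inc p l]| in hk ha *.
set a := #|[set p in PD | ~~ inc p l]| in ha *.
pose U := [set p | inc p l & p \notin PD].
have hU : k + #|U| = q.+1.
  rewrite -(hline l) (card_split [set p | inc p l] (fun p => p \in PD)).
  congr (_ + _); apply: eq_card => x; first by rewrite !inE andbC.
  by rewrite !inE.
pose Mp p := [set m | inc p m & m != l].
have hMp : forall p, q <= #|Mp p|.
  move=> p; have : #|[set m | inc p m]| <= #|l |: Mp p|.
    apply: subset_leq_card; apply/subsetP => m; rewrite !inE => pm.
    by rewrite pm; case: (m == l).
  rewrite hdeg cardsU1 => h; have : ((l \notin Mp p) : nat) <= 1 by case: (l \notin _).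
  lia.
pose B := [set m in LD | m != l].
have hi : forall p, p \in U -> q - a <= #|[set m in B | inc p m]|.
  move=> p; rewrite inE => /andP[pl pPD].
  have := card_split (Mp p) (fun m => m \in LD).
  have -> : #|[set m in Mp p | m \in LD]| = #|[set m in B | inc p m]|.
    apply: eq_card => m; rewrite !inE.
    by case: (inc p m); case: (m \in LD); case: (m == l).
  have : #|[set m in Mp p | m \notin LD]| * 1 <=
         #|[set s in PD | ~~ inc s l]| * 1.
    apply: (@dc_le _ _ _ _ (fun m s => inc s m)).
    - move=> m; rewrite !inE => /andP[/andP[pm mnl] mLD].
      have [s sPD sm] := dl m mLD.
      apply/card_gt0P; exists s; rewrite !inE sPD sm andbT /=.
      apply/negP => sl.
      have nsp : s != p by apply: contraNneq pPD => <-.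
      exact: (uq s p m l nsp mnl sm pm sl pl).
    - move=> s; rewrite !inE => /andP[sPD nsl].
      have nps : p != s by apply: contraNneq nsl => <-.
      apply: leq_trans (two_lines_le1 g' nps).
      by apply: subset_leq_card; apply/subsetP => m; rewrite !inE => /andP[/andP[/andP[-> _] _] ->].
  rewrite !muln1 -/a => h1 h2; have := hMp p; lia.
have part1 : (q.+1 - k) * (q - a) <= #|LD|.
  have : #|U| * (q - a) <= #|B| * 1.
    apply: (@dc_le _ _ _ _ (fun p m => inc p m)); first exact: hi.
    move=> m; rewrite !inE => /andP[_ mnl].
    apply: leq_trans (two_points_le1 g' mnl).
    by apply: subset_leq_card; apply/subsetP => p; rewrite !inE => /andP[/andP[-> _] ->].
  have hB : #|B| <= #|LD|.
    by apply: subset_leq_card; apply/subsetP => m; rewrite inE => /andP[].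
  move=> h; apply: leq_trans _ (leq_trans h _); last by rewrite muln1.
  by apply: leq_mul => //; lia.
split => //.
have [p0] : exists p0, p0 \in U.
  apply/card_gt0P; lia.
rewrite inE => /andP[p0l p0PD].
pose X := [set x | ~~ inc x l].
have S1 : q * q <= #|X|.
  have : #|Mp p0| * q <= #|X| * 1.
    apply: (@dc_le _ _ _ _ (fun m x => inc x m)).
    - move=> m; rewrite inE => /andP[p0m mnl].
      have : #|[set x | inc x m]| <= #|p0 |: [set x in X | inc x m]|.
        apply: subset_leq_card; apply/subsetP => x; rewrite !inE => xm.
        rewrite xm andbT; case: (eqVneq x p0) => //= nx.
        apply/negP => xl; exact: (uq x p0 m l nx mnl xm p0m xl p0l).
      rewrite hline cardsU1 => h; have : ((p0 \notin [set x in X | inc x m]) : nat) <= 1.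
        by case: (p0 \notin _).
      lia.
    - move=> x; rewrite inE => nxl.
      have npx : p0 != x by apply: contraNneq nxl => <-.
      apply: leq_trans (two_lines_le1 g' npx).
      by apply: subset_leq_card; apply/subsetP => m; rewrite !inE => /andP[/andP[-> _] ->].
  have := hMp p0; rewrite muln1 => h1 h2.
  apply: leq_trans h2; rewrite mulnC; exact: leq_mul.
have S2 : #|X| <= a + q * #|LD|.
  rewrite (card_split X (fun x => x \in PD)).
  have -> : #|[set x in X | x \in PD]| = a.
    by apply: eq_card => x; rewrite !inE andbC.
  rewrite leq_add2l.
  have : #|[set x in X | x \notin PD]| * 1 <= #|LD| * q.
    apply: (@dc_le _ _ _ _ (fun x n => inc x n)).
    - move=> x; rewrite !inE => /andP[_ xPD].
      have [n nLD xn] := dp x xPD.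
      by apply/card_gt0P; exists n; rewrite !inE nLD xn.
    - move=> n nLD.
      have [z /andP[zn zl]] : exists z, inc z n && inc z l.
        case: (eqVneq n l) => [-> | nnl]; first by exists p0; rewrite p0l.
        exact: ex3.
      have : [set x in [set x0 in X | x0 \notin PD] | inc x n] \subset [set x | inc x n] :\ z.
        apply/subsetP => x; rewrite !inE => /andP[/andP[xl _] xn].
        rewrite xn andbT; apply: contraNneq xl => ->; exact: zl.
      move/subset_leq_card; have := cardsD1 z [set x | inc x n].
      rewrite hline inE zn /= => e; lia.
  by rewrite muln1 mulnC.
lia.
Qed.

Lemma per_line (P L : finType) (inc : P -> L -> bool) q (PD : {set P}) (LD : {set L}) (l : L) :
  geom inc q ->
  (forall m, m \notin LD -> exists2 p, p \in PD & inc p m) ->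
  (forall p, p \notin PD -> exists2 m, m \in LD & inc p m) ->
  (forall m, #|[set p in PD | inc p m]| < q) ->
  (#|PD| + #|LD| + #|PD| <= 4 * q - 3 \/ 2 * (#|PD| + #|LD|) <= 5 * q - 3) ->
  #|[set p in PD | inc p l]| + q <= #|PD| + 1.
Proof.
move=> g dl dp np hyp.
rewrite (card_split PD (fun p => inc p l)) in hyp *.
set k := #|[set p in PD | inc p l]| in hyp *.
set a := #|[set p in PD | ~~ inc p l]| in hyp *.
have hk : k < q by exact: np.
case: (leqP (q - 1) a) => ha; first lia.
have ha' : a <= q - 2 by lia.
have [h1 h2] := key g dl dp hk ha'.
rewrite -/k -/a in h1 h2.
have hq : 2 <= q by case: g.
have [x hx] : exists x, x = q.+1 - k by eexists.
have [y hy] : exists y, y = q - a by eexists.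
rewrite -hx -hy in h1.
have e1 : 2 <= x by lia.
have e2 : 2 <= y by lia.
have e3 : 2 * x + 2 * y <= x * y + 4.
  have [u ->] : exists u, x = u + 2 by exists (x - 2); lia.
  have [v ->] : exists v, y = v + 2 by exists (y - 2); lia.
  nia.
case: hyp => hyp.
- lia.
- have hL : q <= #|LD| by nia.
  lia.
Qed.

Theorem proposition3 (P L : finType) (inc : P -> L -> bool) (q : nat)
  (PD : {set P}) (LD : {set L}) :
  projective_plane inc q ->
  dominating inc PD LD ->
  ~ primal inc q PD LD ->
  let k := max_pts_on_line inc PD in
  let c := max_lines_through_pt inc LD in
  let D := #|PD| + #|LD| in
  [/\ (D + #|PD| <= 4 * q - 3 -> k + q <= #|PD| + 1),
      (D + #|LD| <= 4 * q - 3 -> c + q <= #|LD| + 1)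
    & (2 * D <= 5 * q - 3 -> k + q <= #|PD| + 1 /\ c + q <= #|LD| + 1)].
Proof.
move=> pp [dp dl] np k c D.
have g := plane_geom pp.
have npP : forall m, #|[set p in PD | inc p m]| < q.
  by move=> m; rewrite ltnNge; apply/negP => h; apply: np; right; exists m.
have npL : forall p, #|[set l in LD | inc p l]| < q.
  by move=> p; rewrite ltnNge; apply/negP => h; apply: np; left; exists p.
have [a0 [l0 _]] : exists (a : P) (l : L), inc a l.
  case: pp => _ _ _ [a [_ [_ [_ _]]]] _; exists a.
  have : 0 < #|[set l | inc a l]| by case: g => _ _ _ _ [_ ->].
  by case/card_gt0P => l; rewrite inE => ?; exists l.
have KB : (#|PD| + #|LD| + #|PD| <= 4 * q - 3 \/ 2 * (#|PD| + #|LD|) <= 5 * q - 3) ->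
    k + q <= #|PD| + 1.
  move=> cond; have h := fun l => per_line l g dl dp npP cond.
  have : k <= #|PD| + 1 - q.
    by apply/bigmax_leqP => l _; have := h l; lia.
  have := h l0; lia.
have CB : (#|LD| + #|PD| + #|LD| <= 4 * q - 3 \/ 2 * (#|LD| + #|PD|) <= 5 * q - 3) ->
    c + q <= #|LD| + 1.
  move=> cond.
  have h := fun p => @per_line L P (fun l p => inc p l) q LD PD p (geom_dual g) dp dl npL cond.
  have : c <= #|LD| + 1 - q.
    by apply/bigmax_leqP => p _; have := h p; lia.
  have := h a0; lia.
split.
- by move=> h; apply: KB; left.
- by move=> h; apply: CB; left; rewrite /D in h; lia.
- move=> h; split; [apply: KB | apply: CB]; right; rewrite /D in h; lia.
Qed.
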